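(* There is an effective construction that, given two mtts $M_1,M_2$ (total, deterministic, without look-ahead) with the same input alphabet $\Sigma$ and output alphabet $\Delta$, both of LSOI, produces an mtt $M$ such that $M$ is of LSOI if and only if $M_1(t)=M_2(t)$ for every $t\in T_\Sigma$. Consequently, deciding whether a given mtt is of LSOI is at least as hard as deciding equivalence of mtts that are of LSOI.
   Context: A (total, deterministic) macro tree transducer (mtt) $M=(Q,\Sigma,\Delta,q_0,R)$: $Q$ a ranked alphabet of states, $\Sigma,\Delta$ ranked input/output alphabets, $q_0\in Q$ of rank $0$, and for each $q\in Q$ of rank $m$ and $\sigma\in\Sigma$ of rank $k$ exactly one rule $\langle q,\sigma(x_1,\dots,x_k)\rangle(y_1,\dots,y_m)\to t$ where $t$ is a tree over $\Delta$, the parameters $y_1,\dots,y_m$ (rank 0) and symbols $\langle q',x_i\rangle$ ($q'\in Q$, $i\in[k]$) of the rank of $q'$. $M_q(\sigma(s_1,\dots,s_k))$ is obtained from the right-hand side by replacing (recursively, innermost first) each subtree $\langle q',x_i\rangle(\xi_1,\dots,\xi_n)$ by $M_{q'}(s_i)$ with each $y_j$ replaced by (the result for) $\xi_j$; $M(s)=M_{q_0}(s)$, a total function $T_\Sigma\to T_\Delta$. For a tree $t$, $\mathrm{sub}(t)=\{t/u\mid u \text{ a node of } t\}$ is its set of (distinct) subtrees and $|t|$ its number of nodes. A total function $\tau:T_\Sigma\to T_\Delta$ is of LSOI (linear size-to-number-of-distinct-output-subtrees increase) if there is $c$ such that $|\mathrm{sub}(\tau(s))|\le c\cdot|s|$ for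 all $s\in T_\Sigma$. *)

(* Defs.v *)
From mathcomp Require Import all_boot.
Set Implicit Arguments. Unset Strict Implicit. Unset Printing Implicit Defensive.

(* Ranked trees.  A tree is [GenTree.Node a ts] with label a : nat and       *)
(* children ts; [GenTree.tree void] has no leaves of the other kind, so it   *)
(* is exactly the type of finitely-branching node-labelled trees, with its   *)
(* canonical eqType structure (structural equality).                         *)
(* A ranked alphabet is a [seq nat]: symbol number a has rank [nth 0 r a].   *)
Definition tree := GenTree.tree void.

Fixpoint wf_tree (r : seq nat) (t : tree) : bool :=
  match t with
  | GenTree.Leaf v => match v with end
  | GenTree.Node a ts =>
      [&& a < size r, size ts == nth 0 r a &
       (fix go l := if l is c :: l' then wf_tree r c && go l' else true) ts]
  end.

Fixpoint tsize (t : tree) : nat :=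
  match t with
  | GenTree.Leaf _ => 1
  | GenTree.Node _ ts =>
      (fix go l := if l is c :: l' then tsize c + go l' else 0) ts + 1
  end.

Fixpoint subtrees (t : tree) : seq tree :=
  match t with
  | GenTree.Leaf _ => [:: t]
  | GenTree.Node _ ts =>
      t :: (fix go l := if l is c :: l' then subtrees c ++ go l' else [::]) ts
  end.

Definition nsub (t : tree) : nat := size (undup (subtrees t)).

(* Right-hand sides of mtt rules.                                           *)
(*   RPar j        : parameter y_(j+1)                                      *)
(*   RCall q i args: <q, x_(i+1)>(args)                                     *)
Inductive rhs : Type :=
| RSym of nat & seq rhs
| RPar of nat
| RCall of nat & nat & seq rhs.

(* An mtt: input alphabet Σ, output alphabet Δ, states Q (state 0 is the  *)
(* initial state q0), and the rule table: [nth (RPar 0) (nth [::] rules q) a] *)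
(* is the right-hand side of the rule for <q, a(x_1..x_k)>(y_1..y_m).       *)
Record mtt : Type := Mtt {
  in_ranks : seq nat;
  out_ranks : seq nat;
  st_ranks : seq nat;
  rules : seq (seq rhs)
}.

Definition rule (M : mtt) (q a : nat) : rhs := nth (RPar 0) (nth [::] (rules M) q) a.

Fixpoint wf_rhs (M : mtt) (m k : nat) (r : rhs) : bool :=
  let go := fix go l := if l is c :: l' then wf_rhs M m k c && go l' else true in
  match r with
  | RSym d args => [&& d < size (out_ranks M), size args == nth 0 (out_ranks M) d & go args]
  | RPar j => j < m
  | RCall q i args =>
      [&& q < size (st_ranks M), i < k, size args == nth 0 (st_ranks M) q & go args]
  end.

(* total deterministic mtt: exactly one well-formed rule per (q, sigma) *)
Definition wf_mtt (M : mtt) : Prop :=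
  [/\ 0 < size (st_ranks M), nth 0 (st_ranks M) 0 = 0,
      size (rules M) = size (st_ranks M),
      (forall q, q < size (st_ranks M) -> size (nth [::] (rules M) q) = size (in_ranks M)) &
      (forall q a, q < size (st_ranks M) -> a < size (in_ranks M) ->
         wf_rhs M (nth 0 (st_ranks M) q) (nth 0 (in_ranks M) a) (rule M q a))].

Definition dtree : tree := GenTree.Node 0 [::].

(* Instantiate a right-hand side: ys = values of the parameters,          *)
(* fs = for each input child i, the function (q, args) |-> M_q(s_i)(args). *)
Fixpoint inst (r : rhs) (ys : seq tree) (fs : seq (nat -> seq tree -> tree)) : tree :=
  let go := fix go l := if l is c :: l' then inst c ys fs :: go l' else [::] in
  match r with
  | RSym d args => GenTree.Node d (go args)
  | RPar j => nth dtree ys j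
  | RCall q i args => nth (fun _ _ => dtree) fs i q (go args)
  end.

Fixpoint msem (M : mtt) (s : tree) : nat -> seq tree -> tree :=
  match s with
  | GenTree.Leaf _ => fun _ _ => dtree
  | GenTree.Node a ss =>
      let fs := (fix go l := if l is c :: l' then msem M c :: go l' else [::]) ss in
      fun q ys => inst (rule M q a) ys fs
  end.

Definition mrun (M : mtt) (s : tree) : tree := msem M s 0 [::].

Definition LSOI (M : mtt) : Prop :=
  exists c : nat, forall s, wf_tree (in_ranks M) s -> nsub (mrun M s) <= c * tsize s.

Definition mtt_equiv (M1 M2 : mtt) : Prop :=
  forall s, wf_tree (in_ranks M1) s -> mrun M1 s = mrun M2 s.

(* Effectiveness: mu-recursive functions (Kleene) with relational semantics, *)
(* and a Goedel encoding of mtts into nat (Cantor pairing, injective).       *)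
Inductive murec : Type :=
| mZero
| mSucc
| mProj of nat
| mComp of murec & seq murec
| mPrim of murec & murec
| mMu of murec.

Inductive mueval : murec -> seq nat -> nat -> Prop :=
| ev_zero v : mueval mZero v 0
| ev_succ x v : mueval mSucc (x :: v) x.+1
| ev_proj i v : i < size v -> mueval (mProj i) v (nth 0 v i)
| ev_comp f gs v ws y :
    mueval_list gs v ws -> mueval f ws y -> mueval (mComp f gs) v y
| ev_prim0 f g v y : mueval f v y -> mueval (mPrim f g) (0 :: v) y
| ev_primS f g n v z y :
    mueval (mPrim f g) (n :: v) z -> mueval g (n :: z :: v) y ->
    mueval (mPrim f g) (n.+1 :: v) y
| ev_mu f v n :
    mueval f (n :: v) 0 -> (forall m, m < n -> exists k, mueval f (m :: v) k.+1) ->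
    mueval (mMu f) v n
with mueval_list : seq murec -> seq nat -> seq nat -> Prop :=
| evl_nil v : mueval_list [::] v [::]
| evl_cons g gs v w ws :
    mueval g v w -> mueval_list gs v ws -> mueval_list (g :: gs) v (w :: ws).

Definition cpair (x y : nat) : nat := ((x + y) * (x + y).+1)./2 + y.

Definition enc_seq (T : Type) (e : T -> nat) (l : seq T) : nat :=
  foldr (fun x acc => (cpair (e x) acc).+1) 0 l.

Fixpoint enc_rhs (r : rhs) : nat :=
  let go := fix go l := if l is c :: l' then (cpair (enc_rhs c) (go l')).+1 else 0 in
  match r with
  | RSym d args => cpair 0 (cpair d (go args))
  | RPar j => cpair 1 j
  | RCall q i args => cpair 2 (cpair q (cpair i (go args)))
  end.

Definition enc_mtt (M : mtt) : nat :=
  cpair (enc_seq id (in_ranks M))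
    (cpair (enc_seq id (out_ranks M))
       (cpair (enc_seq id (st_ranks M)) (enc_seq (enc_seq enc_rhs) (rules M)))).

(* Main.v *)
Require Import Defs.
From mathcomp Require Import all_boot zify.
Require Import Defs.
Set Implicit Arguments. Unset Strict Implicit. Unset Printing Implicit Defensive.

Definition cmp n P (f : seq nat -> nat) := forall v, size v = n -> mueval P v (f v).
Definition comp n (f : seq nat -> nat) := exists P, cmp n P f.

Lemma comp_ext n f g : comp n f -> (forall v, size v = n -> f v = g v) -> comp n g.
Proof. move=> [P HP] E; exists P => v Hv; rewrite -E //; exact: HP. Qed.

Lemma comp_proj n i : i < n -> comp n (fun v => nth 0 v i).
Proof. move=> Hi; exists (mProj i) => v Hv; apply: ev_proj; by rewrite Hv. Qed.

Lemma comp_zero n : comp n (fun _ => 0).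
Proof. exists mZero => v _; exact: ev_zero. Qed.

Lemma comp_S1 : comp 1 (fun v => (nth 0 v 0).+1).
Proof. exists mSucc => [[|x [|]]] //= _; exact: ev_succ. Qed.

Definition compl n (Fs : seq (seq nat -> nat)) := forall F, List.In F Fs -> comp n F.

Lemma compl_list n Fs : compl n Fs ->
  exists gs, forall v, size v = n -> mueval_list gs v (map (fun F => F v) Fs).
Proof.
elim: Fs => [|F Fs IH] H; first by exists [::] => v _; exact: evl_nil.
have [P HP] := H F (or_introl erefl).
have [gs Hgs] := IH (fun G HG => H G (or_intror HG)).
exists (P :: gs) => v Hv /=; apply: evl_cons; [exact: HP|exact: Hgs].
Qed.

Lemma comp_compose n m f Fs : comp m f -> compl n Fs -> size Fs = m ->
  comp n (fun v => f (map (fun F => F v) Fs)).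
Proof.
move=> [P HP] /compl_list [gs Hgs] Hs; exists (mComp P gs) => v Hv.
apply: ev_comp; first exact: Hgs.
apply: HP; by rewrite size_map.
Qed.

Definition comp1 (f : nat -> nat) := comp 1 (fun v => f (nth 0 v 0)).
Definition comp2 (f : nat -> nat -> nat) := comp 2 (fun v => f (nth 0 v 0) (nth 0 v 1)).
Definition comp3 (f : nat -> nat -> nat -> nat) :=
  comp 3 (fun v => f (nth 0 v 0) (nth 0 v 1) (nth 0 v 2)).
Definition comp4 (f : nat -> nat -> nat -> nat -> nat) :=
  comp 4 (fun v => f (nth 0 v 0) (nth 0 v 1) (nth 0 v 2) (nth 0 v 3)).

Lemma comp_app1 f n g : comp1 f -> comp n g -> comp n (fun v => f (g v)).
Proof.
move=> Hf Hg; apply: (comp_compose (Fs := [:: g]) Hf) => //.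
by move=> F [<-|[]].
Qed.
Lemma comp_app2 f n g1 g2 : comp2 f -> comp n g1 -> comp n g2 ->
  comp n (fun v => f (g1 v) (g2 v)).
Proof.
move=> Hf H1 H2; apply: (comp_compose (Fs := [:: g1; g2]) Hf) => //.
by move=> F [<-|[<-|[]]].
Qed.
Lemma comp_app3 f n g1 g2 g3 : comp3 f -> comp n g1 -> comp n g2 -> comp n g3 ->
  comp n (fun v => f (g1 v) (g2 v) (g3 v)).
Proof.
move=> Hf H1 H2 H3; apply: (comp_compose (Fs := [:: g1; g2; g3]) Hf) => //.
by move=> F [<-|[<-|[<-|[]]]].
Qed.
Lemma comp_app4 f n g1 g2 g3 g4 : comp4 f -> comp n g1 -> comp n g2 -> comp n g3 ->
  comp n g4 -> comp n (fun v => f (g1 v) (g2 v) (g3 v) (g4 v)).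
Proof.
move=> Hf H1 H2 H3 H4; apply: (comp_compose (Fs := [:: g1; g2; g3; g4]) Hf) => //.
by move=> F [<-|[<-|[<-|[<-|[]]]]].
Qed.

Lemma comp_S : comp1 S. Proof. exact: comp_S1. Qed.

Lemma comp_const n c : comp n (fun _ => c).
Proof.
elim: c => [|c IH]; first exact: comp_zero.
exact: (comp_app1 (f := S) comp_S IH).
Qed.

Fixpoint prf (f g : seq nat -> nat) x (w : seq nat) :=
  if x is x'.+1 then g (x' :: prf f g x' w :: w) else f w.

Lemma comp_prim n f g : comp n f -> comp n.+2 g ->
  comp n.+1 (fun v => prf f g (head 0 v) (behead v)).
Proof.
move=> [F HF] [G HG]; exists (mPrim F G) => [[|x w]] //= [Hw].
elim: x => [|x IH] /=; first by apply: ev_prim0; exact: HF.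
apply: ev_primS; first exact: IH.
by apply: HG; rewrite /= Hw.
Qed.

Lemma comp_mu n f h : comp n.+1 f ->
  (forall v, size v = n -> f (h v :: v) = 0 /\ forall m, m < h v -> f (m :: v) <> 0) ->
  comp n h.
Proof.
move=> [F HF] Hh; exists (mMu F) => v Hv.
have [H0 H1] := Hh v Hv.
apply: ev_mu; first by rewrite -H0; apply: HF; rewrite /= Hv.
move=> m Hm; exists (f (m :: v)).-1.
have -> : (f (m :: v)).-1.+1 = f (m :: v) by have := H1 m Hm; case: (f _).
apply: HF; by rewrite /= Hv.
Qed.

Create HintDb compdb.

Lemma comp_nthb n i : i.+1 < n -> comp n (fun v => nth 0 (behead v) i).
Proof. move=> H; apply: comp_ext (comp_proj H) _ => v _; by rewrite nth_behead. Qed.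
Lemma comp_head n : 0 < n -> comp n (fun v => head 0 v).
Proof. move=> H; apply: comp_ext (comp_proj H) _ => [[|]] //. Qed.

Ltac cstep :=
  match goal with
  | |- comp _ (fun v => nth 0 v _) => apply: comp_proj; done
  | |- comp _ (fun v => nth 0 (behead v) _) => apply: comp_nthb; done
  | |- comp _ (fun v => head 0 v) => apply: comp_head; done
  | |- comp _ (head 0) => apply: comp_head; done
  | |- comp _ (fun _ => ?c) => apply: comp_const
  | |- comp _ (fun v => ?F (@?A v) (@?B v) (@?C v) (@?D v)) =>
      apply: (@comp_app4 F); [solve [eauto with compdb] | | | | ]
  | |- comp _ (fun v => ?F (@?A v) (@?B v) (@?C v)) =>
      apply: (@comp_app3 F); [solve [eauto with compdb] | | | ]
  | |- comp _ (fun v => ?F (@?A v) (@?B v)) =>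
      apply: (@comp_app2 F); [solve [eauto with compdb] | | ]
  | |- comp _ (fun v => ?F (@?A v)) =>
      apply: (@comp_app1 F); [solve [eauto with compdb] | ]
  end.
Ltac csolve := repeat cstep.

#[export] Hint Resolve comp_S : compdb.

Lemma size2 (v : seq nat) : size v = 2 -> v = [:: nth 0 v 0; nth 0 v 1].
Proof. by case: v => [|a [|b []]]. Qed.

Lemma comp_addn : comp2 addn.
Proof.
apply: (comp_ext (f := fun v => prf (fun w => nth 0 w 0) (fun w => (nth 0 w 1).+1) (head 0 v) (behead v)) (n := 1.+1)).
  { apply: (comp_prim (n := 1) (f := fun w => nth 0 w 0) (g := fun w => (nth 0 w 1).+1)); csolve. }
move=> [|x [|y []]] //= _; elim: x => //= x ->; by rewrite addSn.
Qed.
#[export] Hint Resolve comp_addn : compdb.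

Lemma comp_muln : comp2 muln.
Proof.
apply: (comp_ext (f := fun v => prf (fun w => 0) (fun w => nth 0 w 1 + nth 0 w 2) (head 0 v) (behead v)) (n := 1.+1)).
  { apply: (comp_prim (n := 1) (f := fun w => 0) (g := fun w => nth 0 w 1 + nth 0 w 2)); csolve. }
move=> [|x [|y []]] //= _; elim: x => //= x ->; by rewrite mulSn addnC.
Qed.
#[export] Hint Resolve comp_muln : compdb.

Lemma comp_pred : comp1 predn.
Proof.
apply: (comp_ext (f := fun v => prf (fun w => 0) (fun w => nth 0 w 0) (head 0 v) (behead v)) (n := 0.+1)).
  { apply: (comp_prim (n := 0) (f := fun w => 0) (g := fun w => nth 0 w 0)); csolve. }
by move=> [|x []] //= _; case: x.
Qed.
#[export] Hint Resolve comp_pred : compdb.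

Definition rsubn y x := x - y.
Lemma comp_rsubn : comp2 rsubn.
Proof.
apply: (comp_ext (f := fun v => prf (fun w => nth 0 w 0) (fun w => (nth 0 w 1).-1) (head 0 v) (behead v)) (n := 1.+1)).
  { apply: (comp_prim (n := 1) (f := fun w => nth 0 w 0) (g := fun w => (nth 0 w 1).-1)); csolve. }
move=> [|y [|x []]] //= _; rewrite /rsubn; elim: y => //= [|y ->]; lia.
Qed.
#[export] Hint Resolve comp_rsubn : compdb.

Lemma comp_subn : comp2 subn.
Proof.
rewrite /comp2; apply: (comp_ext (f := fun v => rsubn (nth 0 v 1) (nth 0 v 0))); first by csolve.
done.
Qed.
#[export] Hint Resolve comp_subn : compdb.

Definition sgn x := 1 - (1 - x).
Definition cond c a b := a * sgn c + b * (1 - sgn c).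
Lemma cond0 a b : cond 0 a b = b. Proof. rewrite /cond /sgn; lia. Qed.
Lemma condS c a b : cond c.+1 a b = a. Proof. rewrite /cond /sgn; lia. Qed.
Lemma comp_cond : comp3 cond. Proof. rewrite /comp3 /cond /sgn; csolve. Qed.
#[export] Hint Resolve comp_cond : compdb.
Definition ltnc x y := y - x.
Lemma ltnnP x y : (x < y) = (ltnc x y != 0). Proof. rewrite /ltnc; lia. Qed.
Lemma comp_ltnn : comp2 ltnc. Proof. rewrite /comp2 /ltnc; csolve. Qed.
#[export] Hint Resolve comp_ltnn : compdb.
Definition iszero x := 1 - x.
Lemma comp_iszero : comp1 iszero. Proof. rewrite /comp1 /iszero; csolve. Qed.
#[export] Hint Resolve comp_iszero : compdb.
Definition eqnn x y := iszero ((x - y) + (y - x)).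
Lemma eqnnP x y : (x == y) = (eqnn x y != 0). Proof. rewrite /eqnn /iszero; lia. Qed.
Lemma comp_eqnn : comp2 eqnn. Proof. rewrite /comp2 /eqnn; csolve. Qed.
#[export] Hint Resolve comp_eqnn : compdb.

Definition oddn x := nat_of_bool (odd x).
Lemma comp_odd : comp1 oddn.
Proof.
apply: (comp_ext (f := fun v => prf (fun w => 0) (fun w => 1 - nth 0 w 1) (head 0 v) (behead v)) (n := 0.+1)).
  { apply: (comp_prim (n := 0) (f := fun w => 0) (g := fun w => 1 - nth 0 w 1)); csolve. }
move=> [|x []] //= _; elim: x => //= x ->; rewrite /oddn /=; by case: (odd x).
Qed.
#[export] Hint Resolve comp_odd : compdb.

Lemma comp_half : comp1 half.
Proof.
apply: (comp_ext (f := fun v => prf (fun w => 0) (fun w => nth 0 w 1 + oddn (nth 0 w 0)) (head 0 v) (behead v)) (n := 0.+1)).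
  { apply: (comp_prim (n := 0) (f := fun w => 0) (g := fun w => nth 0 w 1 + oddn (nth 0 w 0))); csolve. }
move=> [|x []] //= _; elim: x => //= x ->.
rewrite /oddn; case: (odd x) (odd_double_half x) => /=; lia.
Qed.
#[export] Hint Resolve comp_half : compdb.

Lemma comp_cpair : comp2 cpair.
Proof. rewrite /comp2 /cpair; csolve. Qed.
#[export] Hint Resolve comp_cpair : compdb.

Fixpoint shiftr K r := match r with
  | RSym d a => RSym d (map (shiftr K) a)
  | RPar j => RPar j
  | RCall q i a => RCall (q + K) i (map (shiftr K) a)
  end.

Definition Erhs dl := RSym dl [::].
Definition gadget dl K2 := RCall 1 1 [:: RCall 2 0 [::]; RCall K2 0 [::]; Erhs dl].
Definition grule dl := RSym dl.+2 [:: RCall 1 0 [:: RPar 0; RPar 1; RSym dl.+1 [:: RPar 2; RPar 0]];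
                                     RCall 1 0 [:: RPar 0; RPar 1; RSym dl.+1 [:: RPar 2; RPar 1]]].
Definition cz (S : seq nat) := find (pred1 0) S.
Definition rowtr dl c K (row : seq rhs) := map (shiftr K) (row ++ nseq 3 (nth (Erhs dl) row c)).
Definition row0 k dl K2 c := nseq k (Erhs dl) ++ [:: if c < k then gadget dl K2 else Erhs dl; Erhs dl; Erhs dl].
Definition row1 k dl := nseq k (RPar 2) ++ [:: RPar 2; grule dl; RPar 2].
Definition build (M1 M2 : mtt) : mtt :=
  let S := in_ranks M1 in let D := out_ranks M1 in
  let k := size S in let dl := size D in
  let K2 := 2 + size (st_ranks M1) in let c := cz S in
  Mtt (S ++ [:: 2;1;0]) (D ++ [:: 0;2;2]) (0 :: 3 :: st_ranks M1 ++ st_ranks M2)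
   (row0 k dl K2 c :: row1 k dl :: map (rowtr dl c 2) (rules M1) ++ map (rowtr dl c K2) (rules M2)).

Definition minz (f : nat -> nat) (b : nat) := find (fun i => f i == 0) (iota 0 b).

Lemma minz_le f b : minz f b <= b.
Proof. by rewrite /minz (leq_trans (find_size _ _)) ?size_iota. Qed.

Lemma minz_zero f b : f b = 0 -> f (minz f b) = 0.
Proof.
move=> Hb; rewrite /minz.
case Hh: (has (fun i => f i == 0) (iota 0 b)).
- have := nth_find 0 Hh; have := Hh; rewrite has_find size_iota => Hl.
  by rewrite nth_iota // add0n => /eqP.
- by move/negbT: Hh => /hasNfind ->; rewrite size_iota.
Qed.

Lemma minz_before f b m : m < minz f b -> f m <> 0.
Proof.
move=> Hm /eqP Hf.
have Hmb : m < b by apply: leq_trans Hm (leq_trans (find_size _ _) _); rewrite size_iota.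
have := before_find 0 Hm; by rewrite nth_iota // add0n Hf.
Qed.

Lemma minz_spec f b : f b = 0 -> f (minz f b) = 0 /\ forall m, m < minz f b -> f m <> 0.
Proof. move=> Hb; split; [exact: minz_zero | exact: minz_before]. Qed.

Lemma minz_eq f b m : m <= b -> f m = 0 -> (forall k, k < m -> f k <> 0) -> minz f b = m.
Proof.
move=> Hmb Hm Hk.
have Hz : f (minz f b) = 0.
  case: (ltnP m b) => H; last by apply: minz_zero; have -> : b = m by lia.
  rewrite /minz.
  have Hh : has (fun i => f i == 0) (iota 0 b) by apply/hasP; exists m; [by rewrite mem_iota | by apply/eqP].
  have := nth_find 0 Hh; have := Hh; rewrite has_find size_iota => Hl.
  by rewrite nth_iota // add0n => /eqP.
case: (ltngtP (minz f b) m) => // H; [by have := Hk _ H | by have := minz_before H].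
Qed.

Lemma comp_minz n (F : nat -> seq nat -> nat) (B : seq nat -> nat) :
  comp (n.+1) (fun v => F (head 0 v) (behead v)) ->
  (forall v, size v = n -> F (B v) v = 0) ->
  comp n (fun v => minz (fun i => F i v) (B v)).
Proof.
move=> HF HB; apply: (comp_mu HF) => v Hv /=.
exact: (minz_spec (f := fun i => F i v) (HB v Hv)).
Qed.

Definition tri m := (m * m.+1)./2.
Lemma triS s : tri s.+1 = tri s + s.+1.
Proof.
rewrite /tri.
have -> : s.+1 * s.+2 = s * s.+1 + (s.+1).*2 by rewrite -muln2; lia.
by rewrite halfD odd_double andbF add0n doubleK.
Qed.
Lemma tri_ge s : s <= tri s.
Proof. elim: s => // s IH; rewrite triS; lia. Qed.
Lemma tri_mono a b : a <= b -> tri a <= tri b.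
Proof. move/subnKC <-; elim: (b - a) => [|k IH]; rewrite ?addn0 // addnS triS; lia. Qed.
Lemma cpairE x y : cpair x y = tri (x + y) + y. Proof. by []. Qed.

Lemma comp_tri : comp1 tri. Proof. rewrite /comp1 /tri; csolve. Qed.
#[export] Hint Resolve comp_tri : compdb.

Definition usum n := minz (fun s => n.+1 - tri s.+1) n.
Lemma usum_spec n : tri (usum n) <= n < tri (usum n).+1.
Proof.
have Hb : n.+1 - tri n.+1 = 0 by have := tri_ge n.+1; lia.
have [H0 H1] := minz_spec (f := fun s => n.+1 - tri s.+1) Hb.
rewrite -/(usum n) in H0 H1; apply/andP; split; last by move: H0; lia.
case E: (usum n) => [|m] //; have := H1 m; rewrite E => /(_ (ltnSn _)); lia.
Qed.
Lemma usum_unique n s : tri s <= n < tri s.+1 -> usum n = s.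
Proof.
move=> /andP [Ha Hb]; have /andP [Hc Hd] := usum_spec n.
case: (ltngtP (usum n) s) => // H.
- have := tri_mono H; lia.
- have := tri_mono H; lia.
Qed.
Lemma comp_usum : comp1 usum.
Proof.
rewrite /comp1 /usum.
apply: (comp_minz (F := fun s v => (nth 0 v 0).+1 - tri s.+1) (B := fun v => nth 0 v 0)).
  csolve.
move=> v _; have := tri_ge (nth 0 v 0).+1; lia.
Qed.
#[export] Hint Resolve comp_usum : compdb.

Definition sndc n := n - tri (usum n).
Definition fstc n := usum n - sndc n.
Lemma usum_cpair x y : usum (cpair x y) = x + y.
Proof. apply: usum_unique; rewrite cpairE triS; lia. Qed.
Lemma sndc_cpair x y : sndc (cpair x y) = y.
Proof. rewrite /sndc usum_cpair cpairE; lia. Qed.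
Lemma fstc_cpair x y : fstc (cpair x y) = x.
Proof. rewrite /fstc sndc_cpair usum_cpair; lia. Qed.
Lemma comp_sndc : comp1 sndc. Proof. rewrite /comp1 /sndc; csolve. Qed.
#[export] Hint Resolve comp_sndc : compdb.
Lemma comp_fstc : comp1 fstc. Proof. rewrite /comp1 /fstc; csolve. Qed.
#[export] Hint Resolve comp_fstc : compdb.
Lemma cpair_ge1 x y : x <= cpair x y. Proof. have := tri_ge (x + y); rewrite cpairE; lia. Qed.
Lemma cpair_ge2 x y : y <= cpair x y. Proof. rewrite cpairE; lia. Qed.
Lemma sndc_le n : sndc n <= n. Proof. rewrite /sndc; lia. Qed.

Definition consc h t := (cpair h t).+1.
Definition hdc c := fstc c.-1.
Definition tlc c := sndc c.-1.
Notation enc := (enc_seq id).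
Lemma enc_cons x l : enc (x :: l) = consc x (enc l). Proof. by []. Qed.
Lemma hdc_cons x t : hdc (consc x t) = x. Proof. by rewrite /hdc /consc /= fstc_cpair. Qed.
Lemma tlc_cons x t : tlc (consc x t) = t. Proof. by rewrite /tlc /consc /= sndc_cpair. Qed.
Lemma comp_consc : comp2 consc. Proof. rewrite /comp2 /consc; csolve. Qed.
#[export] Hint Resolve comp_consc : compdb.
Lemma comp_hdc : comp1 hdc. Proof. rewrite /comp1 /hdc; csolve. Qed.
#[export] Hint Resolve comp_hdc : compdb.
Lemma comp_tlc : comp1 tlc. Proof. rewrite /comp1 /tlc; csolve. Qed.
#[export] Hint Resolve comp_tlc : compdb.
Lemma enc_size l : size l <= enc l.
Proof. elim: l => //= x l IH; have := cpair_ge2 x (enc l); lia. Qed.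
Lemma enc_eq0 l : (enc l == 0) = (l == [::]). Proof. by case: l. Qed.

Definition tlnc i c := iter i tlc c.
Lemma comp_tlnc : comp2 tlnc.
Proof.
rewrite /comp2.
apply: (comp_ext (f := fun v => prf (fun w => nth 0 w 0) (fun w => tlc (nth 0 w 1)) (head 0 v) (behead v)) (n := 1.+1)).
  { apply: (comp_prim (n := 1) (f := fun w => nth 0 w 0) (g := fun w => tlc (nth 0 w 1))); csolve. }
move=> [|i [|c []]] //= _; elim: i => //= i ->; done.
Qed.
#[export] Hint Resolve comp_tlnc : compdb.
Lemma tlnc_enc i l : tlnc i (enc l) = enc (drop i l).
Proof.
elim: i l => [|i IH] l; first by rewrite drop0.
rewrite /tlnc iterSr -/(tlnc i (tlc (enc l))).
case: l => [|x l].
- have -> : tlc (enc [::]) = enc [::].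
    by rewrite /tlc /= -[0]/(cpair 0 0) sndc_cpair.
  by rewrite IH.
- by rewrite enc_cons tlc_cons IH.
Qed.
Definition nthc c i := hdc (tlnc i c).
Lemma comp_nthc : comp2 nthc. Proof. rewrite /comp2 /nthc; csolve. Qed.
#[export] Hint Resolve comp_nthc : compdb.
Lemma hdc0 : hdc 0 = 0.
Proof. rewrite /hdc /= -[0]/(cpair 0 0); exact: fstc_cpair. Qed.
Lemma nthc_enc l i : nthc (enc l) i = nth 0 l i.
Proof.
rewrite /nthc tlnc_enc; case: (ltnP i (size l)) => H.
- by rewrite (drop_nth 0 H) enc_cons hdc_cons.
- by rewrite drop_oversize // nth_default.
Qed.

Definition sizec c := minz (fun i => tlnc i c) c.
Lemma comp_sizec : comp1 sizec.
Proof.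
rewrite /comp1 /sizec.
apply: (comp_minz (F := fun i v => tlnc i (nth 0 v 0)) (B := fun v => nth 0 v 0)); first csolve.
move=> v _; set c := nth 0 v 0; rewrite /tlnc.
suff : forall i, iter i tlc c <= c - i by move/(_ c); rewrite subnn; lia.
elim=> [|i IH]; first (rewrite /=; lia).
rewrite iterS; move: IH; set x := iter i tlc c => IH; have := sndc_le x.-1; rewrite /tlc; lia.
Qed.
#[export] Hint Resolve comp_sizec : compdb.
Lemma sizec_enc l : sizec (enc l) = size l.
Proof.
apply: minz_eq; first exact: enc_size.
  by rewrite tlnc_enc drop_size.
move=> k Hk; rewrite tlnc_enc => /eqP; rewrite enc_eq0 => /eqP H.
by have := congr1 size H; rewrite size_drop /=; lia.
Qed.

Definition find0c c := minz (fun i => tlnc i c * hdc (tlnc i c)) c.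
Lemma comp_find0c : comp1 find0c.
Proof.
rewrite /comp1 /find0c.
apply: (comp_minz (F := fun i v => tlnc i (nth 0 v 0) * hdc (tlnc i (nth 0 v 0))) (B := fun v => nth 0 v 0)); first csolve.
move=> v _; set c := nth 0 v 0; rewrite /tlnc.
suff : forall i, iter i tlc c <= c - i by move/(_ c); rewrite subnn; lia.
elim=> [|i IH]; first (rewrite /=; lia).
rewrite iterS; move: IH; set x := iter i tlc c => IH; have := sndc_le x.-1; rewrite /tlc; lia.
Qed.
#[export] Hint Resolve comp_find0c : compdb.
Lemma find0c_enc l : find0c (enc l) = find (pred1 0) l.
Proof.
apply: minz_eq.
- exact: leq_trans (find_size _ _) (enc_size l).
- rewrite tlnc_enc; case: (ltnP (find (pred1 0) l) (size l)) => H.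
  + rewrite (drop_nth 0 H) enc_cons hdc_cons.
    have : has (pred1 0) l by rewrite has_find.
    by move/(nth_find 0)=> /= /eqP ->; rewrite muln0.
  + by rewrite drop_oversize.
- move=> k Hk; rewrite tlnc_enc.
  have Hks : k < size l by exact: leq_trans Hk (find_size _ _).
  rewrite (drop_nth 0 Hks) enc_cons hdc_cons.
  have := before_find 0 Hk => /= Hn.
  rewrite /consc; lia.
Qed.

Definition nthdef c i d := cond (ltnc i (sizec c)) (nthc c i) d.
Lemma comp_nthdef : comp3 nthdef. Proof. rewrite /comp3 /nthdef; csolve. Qed.
#[export] Hint Resolve comp_nthdef : compdb.
Lemma nthdef_enc l i d : nthdef (enc l) i d = nth d l i.
Proof.
rewrite /nthdef sizec_enc nthc_enc /ltnc.
case: (ltnP i (size l)) => H.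
- have -> : size l - i = (size l - i).-1.+1 by lia.
  by rewrite condS; apply: set_nth_default.
- have -> : size l - i = 0 by lia.
  by rewrite cond0 nth_default.
Qed.

Fixpoint macc (e : nat -> nat -> nat) c n t pk j :=
  if j is j'.+1 then consc (e (nthc c (n - 1 - j')) pk) (macc e c n t pk j') else t.
Definition mapappc e c t pk := macc e c (sizec c) t pk (sizec c).

Lemma comp_macc e : comp2 e ->
  comp 5 (fun v => macc e (nth 0 v 1) (nth 0 v 2) (nth 0 v 3) (nth 0 v 4) (nth 0 v 0)).
Proof.
move=> He.
apply: (comp_ext (f := fun v => prf (fun w => nth 0 w 2)
   (fun w => consc (e (nthc (nth 0 w 2) (nth 0 w 3 - 1 - nth 0 w 0)) (nth 0 w 5)) (nth 0 w 1)) (head 0 v) (behead v)) (n := 4.+1)).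
  { apply: (comp_prim (n := 4)); first csolve.
    apply: (comp_app2 comp_consc); last csolve.
    apply: (comp_app2 He); csolve. }
move=> [|j [|c [|n [|t [|pk []]]]]] //= _; elim: j => //= j ->; done.
Qed.

Lemma comp_mapappc e : comp2 e -> comp3 (mapappc e).
Proof.
move=> He; rewrite /comp3 /mapappc.
have H5 := comp_macc He.
apply: (comp_compose (Fs := [:: fun v => sizec (nth 0 v 0); fun v => nth 0 v 0;
   fun v => sizec (nth 0 v 0); fun v => nth 0 v 1; fun v => nth 0 v 2]) H5) => //.
by move=> F [<-|[<-|[<-|[<-|[<-|[]]]]]]; csolve.
Qed.

Lemma mapappc_enc e s t pk :
  mapappc e (enc s) (enc t) pk = enc (map (e ^~ pk) s ++ t).
Proof.
rewrite /mapappc sizec_enc.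
suff H : forall j, j <= size s ->
  macc e (enc s) (size s) (enc t) pk j = enc (map (e ^~ pk) (drop (size s - j) s) ++ t).
  by rewrite H // subnn drop0.
elim=> [|j IH] Hj /=; first by rewrite subn0 drop_size.
rewrite IH; last lia.
have Hl : size s - j.+1 < size s by lia.
rewrite (drop_nth 0 Hl) /= nthc_enc.
have -> : (size s - j.+1).+1 = size s - j by lia.
by have -> : size s - 1 - j = size s - j.+1 by lia.
Qed.

Definition appc c1 c2 := mapappc (fun x _ => x) c1 c2 0.
Lemma comp_appc : comp2 appc.
Proof.
have H := comp_mapappc (e := fun x _ => x) ltac:(rewrite /comp2; csolve).
rewrite /comp2 /appc.
apply: (comp_app3 H); csolve.
Qed.
#[export] Hint Resolve comp_appc : compdb.
Lemma appc_enc s t : appc (enc s) (enc t) = enc (s ++ t).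
Proof. by rewrite /appc mapappc_enc map_id. Qed.

Definition nseqc n x := iter n (consc x) 0.
Lemma comp_nseqc : comp2 nseqc.
Proof.
rewrite /comp2.
apply: (comp_ext (f := fun v => prf (fun w => 0) (fun w => consc (nth 0 w 2) (nth 0 w 1)) (head 0 v) (behead v)) (n := 1.+1)).
  { apply: (comp_prim (n := 1)); csolve. }
move=> [|n [|x []]] //= _; elim: n => //= n ->; done.
Qed.
#[export] Hint Resolve comp_nseqc : compdb.
Lemma nseqc_enc n x : nseqc n x = enc (nseq n x).
Proof. by elim: n => //= n IH; rewrite /nseqc /= -/(nseqc n x) IH. Qed.

(* course-of-values recursion with a packed parameter *)
Fixpoint hist (s : nat -> nat -> nat -> nat) x pk :=
  if x is x'.+1 then consc (s x' (hist s x' pk) pk) (hist s x' pk) else 0.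
Definition srec s x pk := s x (hist s x pk) pk.
Definition lk H x m := nthc H (x - 1 - m).

Lemma comp_srec s : comp3 s -> comp2 (srec s).
Proof.
move=> Hs.
have Hh : comp2 (hist s).
  rewrite /comp2.
  apply: (comp_ext (f := fun v => prf (fun w => 0)
     (fun w => consc (s (nth 0 w 0) (nth 0 w 1) (nth 0 w 2)) (nth 0 w 1)) (head 0 v) (behead v)) (n := 1.+1)).
    { apply: (comp_prim (n := 1)); first csolve.
      apply: (comp_app2 comp_consc); last csolve.
      apply: (comp_app3 Hs); csolve. }
  move=> [|x [|pk []]] //= _; elim: x => //= x ->; done.
rewrite /comp2 /srec.
apply: (comp_app3 Hs); first csolve; last csolve.
apply: (comp_app2 Hh); csolve.
Qed.

Lemma hist_enc s x pk : hist s x pk = enc [seq srec s i pk | i <- rev (iota 0 x)].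
Proof.
elim: x => // x IH.
rewrite -[x.+1]addn1 iotaD rev_cat /= add0n -IH /srec.
by rewrite addn1.
Qed.

Lemma lk_hist s x pk m : m < x -> lk (hist s x pk) x m = srec s m pk.
Proof.
move=> Hm; rewrite /lk hist_enc nthc_enc (nth_map 0); last by rewrite size_rev size_iota; lia.
rewrite nth_rev size_iota; last lia.
rewrite nth_iota; last lia.
congr srec; lia.
Qed.

Lemma srec_ind s (Spec : nat -> nat -> Prop) pk :
  (forall x H, (forall m, m < x -> Spec m (lk H x m)) -> Spec x (s x H pk)) ->
  forall x, Spec x (srec s x pk).
Proof.
move=> Hstep x; elim: x {-2}x (leqnn x) => [|n IH] x Hx.
- apply: Hstep => m Hm; lia.
- apply: Hstep => m Hm; rewrite lk_hist //; apply: IH; lia.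
Qed.


Lemma enc_seq_map (T : Type) (e : T -> nat) l : enc_seq e l = enc (map e l).
Proof. by elim: l => //= x l ->. Qed.

Lemma go_enc a : (fix go (l : seq rhs) : nat :=
     match l with [::] => 0 | c :: l' => (cpair (enc_rhs c) (go l')).+1 end) a
   = enc (map enc_rhs a).
Proof. by elim: a => //= x a ->. Qed.

Lemma enc_sym d a : enc_rhs (RSym d a) = cpair 0 (cpair d (enc (map enc_rhs a))).
Proof. by rewrite /= go_enc. Qed.
Lemma enc_par j : enc_rhs (RPar j) = cpair 1 j. Proof. by []. Qed.
Lemma enc_call q i a : enc_rhs (RCall q i a) = cpair 2 (cpair q (cpair i (enc (map enc_rhs a)))).
Proof. by rewrite /= go_enc. Qed.

Lemma comp_lk : comp3 lk. Proof. rewrite /comp3 /lk; csolve. Qed.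
#[export] Hint Resolve comp_lk : compdb.

Definition vsym y H := cpair 0 (cpair (fstc (sndc y./2)) (lk H y (2 * sndc (sndc y./2)))).
Definition vcall y H K := cpair 2 (cpair (fstc (sndc y./2) + K)
   (cpair (fstc (sndc (sndc y./2))) (lk H y (2 * sndc (sndc (sndc y./2)))))).
Definition vrhs y H K := cond (eqnn (fstc y./2) 0) (vsym y H) (cond (eqnn (fstc y./2) 1) y./2 (vcall y H K)).
Definition vlist y H := cond y./2 (consc (lk H y (2 * hdc y./2).+1) (lk H y (2 * tlc y./2))) 0.
Definition sstep y H K := cond (oddn y) (vrhs y H K) (vlist y H).

Lemma comp_sstep : comp3 sstep.
Proof. rewrite /comp3 /sstep /vrhs /vsym /vcall /vlist; csolve. Qed.

Lemma eqnn_refl x : eqnn x x = 1. Proof. rewrite /eqnn /iszero; lia. Qed.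
Lemma eqnn_neq x y : x != y -> eqnn x y = 0. Proof. rewrite /eqnn /iszero; lia. Qed.
Lemma oddn_odd x : oddn (2 * x).+1 = 1. Proof. by rewrite /oddn /= mul2n odd_double. Qed.
Lemma oddn_even x : oddn (2 * x) = 0. Proof. by rewrite /oddn mul2n odd_double. Qed.
Lemma half_odd x : (2 * x).+1./2 = x. Proof. by rewrite mul2n -[(_).+1]/(true + x.*2) half_bit_double. Qed.
Lemma half_even x : (2 * x)./2 = x. Proof. by rewrite mul2n doubleK. Qed.

Definition shspec K y v :=
  (forall r, y = (2 * enc_rhs r).+1 -> v = enc_rhs (shiftr K r)) /\
  (forall l, y = 2 * enc (map enc_rhs l) -> v = enc (map enc_rhs (map (shiftr K) l))).

Lemma sstep_ok K y : shspec K y (srec sstep y K).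
Proof.
apply: srec_ind => {}y H IH; split.
- move=> r Hy.
  have Ho : oddn y = 1 by rewrite Hy oddn_odd.
  have Hh : y./2 = enc_rhs r by rewrite Hy half_odd.
  rewrite /sstep Ho condS /vrhs /vsym /vcall Hh.
  case: r Hy Hh => [d a|j|q i a] Hy Hh.
  + rewrite enc_sym fstc_cpair sndc_cpair fstc_cpair sndc_cpair eqnn_refl condS.
    rewrite (proj2 (IH _ _) a) ?enc_sym //.
    rewrite Hy enc_sym; have := cpair_ge2 d (enc (map enc_rhs a)); have := cpair_ge2 0 (cpair d (enc (map enc_rhs a))); lia.
  + by rewrite enc_par fstc_cpair eqnn_neq // cond0 eqnn_refl condS.
  + rewrite enc_call fstc_cpair !sndc_cpair !fstc_cpair eqnn_neq // cond0 eqnn_neq // cond0.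
    rewrite (proj2 (IH _ _) a) ?enc_call //.
    rewrite Hy enc_call.
    have := cpair_ge2 i (enc (map enc_rhs a)); have := cpair_ge2 q (cpair i (enc (map enc_rhs a))).
    have := cpair_ge2 2 (cpair q (cpair i (enc (map enc_rhs a)))); lia.
- move=> l Hy.
  have Ho : oddn y = 0 by rewrite Hy oddn_even.
  have Hh : y./2 = enc (map enc_rhs l) by rewrite Hy half_even.
  rewrite /sstep Ho cond0 /vlist Hh.
  case: l Hy Hh => [|x l] Hy Hh; first by rewrite cond0.
  rewrite !map_cons !enc_cons {1}/consc condS hdc_cons tlc_cons.
  rewrite (proj1 (IH _ _) x) //; last first.
    rewrite Hy map_cons enc_cons /consc; have := cpair_ge1 (enc_rhs x) (enc (map enc_rhs l)); lia.
  rewrite (proj2 (IH _ _) l) //.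
  rewrite Hy map_cons enc_cons /consc; have := cpair_ge2 (enc_rhs x) (enc (map enc_rhs l)); lia.
Qed.

Definition mapshiftc K c := srec sstep (2 * c) K.
Lemma comp_mapshiftc : comp2 mapshiftc.
Proof.
have H := comp_srec comp_sstep.
rewrite /comp2 /mapshiftc; apply: (comp_app2 H); csolve.
Qed.
#[export] Hint Resolve comp_mapshiftc : compdb.
Lemma mapshiftc_enc K l : mapshiftc K (enc (map enc_rhs l)) = enc (map enc_rhs (map (shiftr K) l)).
Proof. exact: (proj2 (sstep_ok K _) l erefl). Qed.

Definition Erc dl := cpair 0 (cpair dl 0).
Definition gadc dl K2 := cpair 2 (cpair 1 (cpair 1 (consc (cpair 2 (cpair 2 (cpair 0 0)))
   (consc (cpair 2 (cpair K2 (cpair 0 0))) (consc (Erc dl) 0))))).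
Definition grc dl := cpair 0 (cpair dl.+2
   (consc (cpair 2 (cpair 1 (cpair 0 (consc (cpair 1 0) (consc (cpair 1 1)
       (consc (cpair 0 (cpair dl.+1 (consc (cpair 1 2) (consc (cpair 1 0) 0)))) 0))))))
   (consc (cpair 2 (cpair 1 (cpair 0 (consc (cpair 1 0) (consc (cpair 1 1)
       (consc (cpair 0 (cpair dl.+1 (consc (cpair 1 2) (consc (cpair 1 1) 0)))) 0)))))) 0))).
Lemma Erc_ok dl : Erc dl = enc_rhs (Erhs dl). Proof. by []. Qed.
Lemma gadc_ok dl K2 : gadc dl K2 = enc_rhs (gadget dl K2). Proof. by []. Qed.
Lemma grc_ok dl : grc dl = enc_rhs (grule dl). Proof. by []. Qed.
Lemma comp_Erc : comp1 Erc. Proof. rewrite /comp1 /Erc; csolve. Qed.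
Lemma comp_gadc : comp2 gadc. Proof. rewrite /comp2 /gadc /Erc; csolve. Qed.
Lemma comp_grc : comp1 grc. Proof. rewrite /comp1 /grc; csolve. Qed.
#[export] Hint Resolve comp_Erc comp_gadc comp_grc : compdb.

Definition rowtrc row pk :=
  mapshiftc (fstc pk) (appc row (consc (nthdef row (fstc (sndc pk)) (sndc (sndc pk)))
     (consc (nthdef row (fstc (sndc pk)) (sndc (sndc pk)))
     (consc (nthdef row (fstc (sndc pk)) (sndc (sndc pk))) 0)))).
Lemma comp_rowtrc : comp2 rowtrc. Proof. rewrite /comp2 /rowtrc; csolve. Qed.
Lemma comp_maprows : comp3 (mapappc rowtrc). Proof. exact: comp_mapappc comp_rowtrc. Qed.
#[export] Hint Resolve comp_maprows : compdb.

Lemma nth_map_def (T U : Type) (f : T -> U) x0 s i : nth (f x0) (map f s) i = f (nth x0 s i).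
Proof. by elim: s i => [|x s IH] [|i] //=. Qed.

Lemma rowtrc_ok dl c K row :
  rowtrc (enc (map enc_rhs row)) (cpair K (cpair c (Erc dl))) = enc (map enc_rhs (rowtr dl c K row)).
Proof.
rewrite /rowtrc !sndc_cpair !fstc_cpair nthdef_enc Erc_ok nth_map_def.
set j := nth (Erhs dl) row c.
have -> : consc (enc_rhs j) (consc (enc_rhs j) (consc (enc_rhs j) 0)) = enc (map enc_rhs (nseq 3 j)) by [].
rewrite appc_enc -map_cat.
by rewrite mapshiftc_enc.
Qed.

Lemma maprows_ok dl c K R :
  mapappc rowtrc (enc (map (fun row => enc (map enc_rhs row)) R)) 0 (cpair K (cpair c (Erc dl)))
  = enc (map (fun row => enc (map enc_rhs row)) (map (rowtr dl c K) R)).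
Proof.
rewrite -[0]/(enc [::]) mapappc_enc cats0 -!map_comp; apply: congr1; apply: eq_map => row /=.
exact: rowtrc_ok.
Qed.

Definition Cn e1 e2 :=
  let S := fstc e1 in let D := fstc (sndc e1) in
  let Q1 := fstc (sndc (sndc e1)) in let R1 := sndc (sndc (sndc e1)) in
  let Q2 := fstc (sndc (sndc e2)) in let R2 := sndc (sndc (sndc e2)) in
  let k := sizec S in let dl := sizec D in let K2 := 2 + sizec Q1 in
  let c := find0c S in
  cpair (appc S (consc 2 (consc 1 (consc 0 0))))
   (cpair (appc D (consc 0 (consc 2 (consc 2 0))))
    (cpair (consc 0 (consc 3 (appc Q1 Q2)))
      (consc (appc (nseqc k (Erc dl)) (consc (cond (ltnc c k) (gadc dl K2) (Erc dl))
                (consc (Erc dl) (consc (Erc dl) 0))))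
       (consc (appc (nseqc k (cpair 1 2)) (consc (cpair 1 2) (consc (grc dl) (consc (cpair 1 2) 0))))
        (appc (mapappc rowtrc R1 0 (cpair 2 (cpair c (Erc dl))))
              (mapappc rowtrc R2 0 (cpair K2 (cpair c (Erc dl))))))))).


Lemma comp_Cn : comp2 Cn.
Proof. rewrite /comp2 /Cn; cbv zeta. csolve. Qed.


Lemma enc_rules R : enc_seq (enc_seq enc_rhs) R = enc (map (fun row => enc (map enc_rhs row)) R).
Proof. rewrite enc_seq_map; congr enc; apply: eq_map => row; exact: enc_seq_map. Qed.
Lemma enc3 a b c : enc [:: a; b; c] = consc a (consc b (consc c 0)). Proof. by []. Qed.

Opaque fstc sndc cpair sizec find0c appc nseqc mapappc.
Lemma Cn_ok M1 M2 : Cn (enc_mtt M1) (enc_mtt M2) = enc_mtt (build M1 M2).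
Proof.
case: M1 M2 => S D Q1 R1 [S2 D2 Q2 R2].
rewrite /Cn /enc_mtt /build.
cbn [in_ranks out_ranks st_ranks rules].
rewrite !sndc_cpair.
rewrite !fstc_cpair.
rewrite !enc_rules.
rewrite !maprows_ok.
rewrite !sizec_enc find0c_enc.
rewrite -!enc3 !appc_enc -!enc_cons.
rewrite [in RHS]map_cons [in RHS]map_cons map_cat.
congr (cpair _ (cpair _ (cpair _ (enc (_ :: _ :: _))))).
- rewrite /row0 map_cat map_nseq nseqc_enc !Erc_ok appc_enc /cz.
  congr (enc (_ ++ (_ :: _))).
  case: ltnP => H.
  + rewrite /ltnc; have -> : size S - find (pred1 0) S = (size S - find (pred1 0) S).-1.+1 by lia.
    by rewrite condS gadc_ok.
  + rewrite /ltnc; have -> : size S - find (pred1 0) S = 0 by lia.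
    by rewrite cond0.
- rewrite /row1 map_cat map_nseq nseqc_enc.
  have -> : cpair 1 2 = enc_rhs (RPar 2) by [].
  by rewrite grc_ok appc_enc.
Qed.

Transparent fstc sndc cpair sizec find0c appc nseqc mapappc.

Notation Node := (@GenTree.Node void).

Lemma tree_ind2 (P : tree -> Prop) :
  (forall v, P (GenTree.Leaf v)) ->
  (forall a ts, (forall t, List.In t ts -> P t) -> P (Node a ts)) -> forall t, P t.
Proof.
move=> HL HN; fix IH 1 => -[v|a ts]; first exact: HL.
apply: HN; elim: ts => [|t ts IHts] u /=; [case | case=> [<-|Hu]; [exact: IH|exact: IHts]].
Qed.

Lemma rhs_ind2 (P : rhs -> Prop) :
  (forall d a, (forall x, List.In x a -> P x) -> P (RSym d a)) ->
  (forall j, P (RPar j)) ->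
  (forall q i a, (forall x, List.In x a -> P x) -> P (RCall q i a)) -> forall r, P r.
Proof.
move=> HS HP HC; fix IH 1 => -[d a|j|q i a]; [apply: HS| exact: HP| apply: HC];
  (elim: a => [|x a IHa] y /=; [case | case=> [<-|Hy]; [exact: IH | exact: IHa]]).
Qed.

Lemma wf_tree_node r a ts :
  wf_tree r (Node a ts) = [&& a < size r, size ts == nth 0 r a & all (wf_tree r) ts].
Proof. rewrite /=; congr [&& _, _ & _]; by elim: ts => //= t ts ->. Qed.

Lemma tsize_node a ts : tsize (Node a ts) = sumn (map tsize ts) + 1.
Proof. rewrite /=; congr (_ + _); by elim: ts => //= t ts ->. Qed.

Lemma subtrees_node a ts : subtrees (Node a ts) = Node a ts :: flatten (map subtrees ts).
Proof. rewrite /=; congr (_ :: _); by elim: ts => //= t ts ->. Qed.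

Lemma wf_rhs_sym M m k d a : wf_rhs M m k (RSym d a) =
  [&& d < size (out_ranks M), size a == nth 0 (out_ranks M) d & all (wf_rhs M m k) a].
Proof. rewrite /=; congr [&& _, _ & _]; by elim: a => //= t ts ->. Qed.
Lemma wf_rhs_call M m k q i a : wf_rhs M m k (RCall q i a) =
  [&& q < size (st_ranks M), i < k, size a == nth 0 (st_ranks M) q & all (wf_rhs M m k) a].
Proof. rewrite /=; congr [&& _, _, _ & _]; by elim: a => //= t ts ->. Qed.
Lemma wf_rhs_par M m k j : wf_rhs M m k (RPar j) = (j < m). Proof. by []. Qed.

Lemma inst_sym d a ys fs : inst (RSym d a) ys fs = Node d (map (fun c => inst c ys fs) a).
Proof. rewrite /=; congr (Node d _); by elim: a => //= t ts ->. Qed.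
Lemma inst_call q i a ys fs :
  inst (RCall q i a) ys fs = nth (fun _ _ => dtree) fs i q (map (fun c => inst c ys fs) a).
Proof. rewrite /=; congr (nth _ fs i q _); by elim: a => //= t ts ->. Qed.
Lemma inst_par j ys fs : inst (RPar j) ys fs = nth dtree ys j. Proof. by []. Qed.

Lemma msem_node M a ss q ys : msem M (Node a ss) q ys = inst (rule M q a) ys (map (msem M) ss).
Proof. rewrite /=; congr (inst _ ys _); by elim: ss => //= t ts ->. Qed.

Lemma allIn (T : Type) (p : pred T) l : all p l <-> (forall x, List.In x l -> p x).
Proof.
elim: l => [|y l IH] /=; first by split.
split.
- move=> /andP [Hy /IH Hl] x [<-|Hx]; [exact: Hy | exact: Hl].
- move=> H; rewrite H ?IH; [by move=> x Hx; apply: H; right | by left].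
Qed.

Lemma all_map_In (T U : Type) (f : T -> U) (p : pred U) l :
  (forall x, List.In x l -> p (f x)) -> all p (map f l).
Proof. move=> H; apply/allIn => x /List.in_map_iff [y [<- Hy]]; exact: H. Qed.

Lemma shiftr_sym K d a : shiftr K (RSym d a) = RSym d (map (shiftr K) a). Proof. by []. Qed.
Lemma shiftr_call K q i a : shiftr K (RCall q i a) = RCall (q + K) i (map (shiftr K) a). Proof. by []. Qed.

Lemma wf_shift (Mi M : mtt) K m kk kk' r :
  (forall d, d < size (out_ranks Mi) -> d < size (out_ranks M) /\ nth 0 (out_ranks M) d = nth 0 (out_ranks Mi) d) ->
  (forall q, q < size (st_ranks Mi) -> q + K < size (st_ranks M) /\ nth 0 (st_ranks M) (q + K) = nth 0 (st_ranks Mi) q) ->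
  kk <= kk' -> wf_rhs Mi m kk r -> wf_rhs M m kk' (shiftr K r).
Proof.
move=> HD HQ Hk; elim/rhs_ind2: r => [d a IH|j|q i a IH].
- rewrite shiftr_sym !wf_rhs_sym => /and3P [Hd Ha /allIn Hall].
  have [Hd' Hn] := HD d Hd.
  rewrite Hd' size_map Hn Ha /=; apply: all_map_In => x Hx.
  exact: IH (Hall _ Hx).
- by [].
- rewrite shiftr_call !wf_rhs_call => /and4P [Hq Hi Ha /allIn Hall].
  have [Hq' Hn] := HQ q Hq.
  rewrite Hq' size_map Hn Ha (leq_trans Hi Hk) /=; apply: all_map_In => x Hx.
  exact: IH (Hall _ Hx).
Qed.

Lemma shiftr_noc K m r (M : mtt) : wf_rhs M m 0 r -> shiftr K r = r.
Proof.
elim/rhs_ind2: r => [d a IH|j|q i a IH].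
- rewrite shiftr_sym wf_rhs_sym => /and3P [_ _ /allIn H].
  congr (RSym d _); elim: a IH H => //= x a IHa IH H.
  rewrite IH; [|by left|by apply: H; left]; congr cons.
  apply: IHa => y Hy; [by apply: IH; right | by apply: H; right].
- by [].
- by rewrite wf_rhs_call ltn0 andbF.
Qed.

Lemma nth_nseq_lt (T : Type) (x0 x : T) n i : i < n -> nth x0 (nseq n x) i = x.
Proof. by move=> H; rewrite nth_nseq H. Qed.


Lemma row0_nth k dl K2 c a : a < k + 3 ->
  nth (RPar 0) (row0 k dl K2 c) a = if a == k then (if c < k then gadget dl K2 else Erhs dl) else Erhs dl.
Proof.
move=> Ha; rewrite /row0 nth_cat size_nseq.
case: ltnP => H; first by rewrite nth_nseq_lt // (_ : a == k = false) //; lia.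
have : a - k < 3 by lia.
case E: (a - k) => [|[|[|]]] // _.
- by (have -> : a = k by lia); rewrite eqxx.
- by rewrite (_ : a == k = false) //; lia.
- by rewrite (_ : a == k = false) //; lia.
Qed.

Lemma row1_nth k dl a : a < k + 3 ->
  nth (RPar 0) (row1 k dl) a = if a == k.+1 then grule dl else RPar 2.
Proof.
move=> Ha; rewrite /row1 nth_cat size_nseq.
case: ltnP => H; first by rewrite nth_nseq_lt // (_ : a == k.+1 = false) //; lia.
have : a - k < 3 by lia.
case E: (a - k) => [|[|[|]]] // _.
- by rewrite (_ : a == k.+1 = false) //; lia.
- by (have -> : a = k.+1 by lia); rewrite eqxx.
- by rewrite (_ : a == k.+1 = false) //; lia.
Qed.

Lemma rowtr_nth dl c K row a : a < size row + 3 ->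
  nth (RPar 0) (rowtr dl c K row) a =
  shiftr K (if a < size row then nth (RPar 0) row a else nth (Erhs dl) row c).
Proof.
move=> Ha; rewrite /rowtr -[RPar 0]/(shiftr K (RPar 0)) nth_map_def nth_cat.
case: ltnP => H //; rewrite nth_nseq_lt //; lia.
Qed.

Lemma size_rowtr dl c K row : size (rowtr dl c K row) = size row + 3.
Proof. by rewrite /rowtr size_map size_cat size_nseq. Qed.

Section Build.
Variables M1 M2 : mtt.
Hypothesis W1 : wf_mtt M1.
Hypothesis W2 : wf_mtt M2.
Hypothesis ES : in_ranks M2 = in_ranks M1.
Hypothesis ED : out_ranks M2 = out_ranks M1.

Local Notation S := (in_ranks M1).
Local Notation D := (out_ranks M1).
Local Notation Q1 := (st_ranks M1).
Local Notation Q2 := (st_ranks M2).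
Local Notation R1 := (rules M1).
Local Notation R2 := (rules M2).
Local Notation k := (size S).
Local Notation dl := (size D).
Local Notation n1 := (size Q1).
Local Notation K2 := (2 + size Q1).
Local Notation c := (cz S).
Local Notation M := (build M1 M2).

Lemma sizeR1 : size R1 = n1. Proof. by case: W1. Qed.
Lemma sizeR2 : size R2 = size Q2. Proof. by case: W2. Qed.
Lemma row1_size q : q < n1 -> size (nth [::] R1 q) = k. Proof. by case: W1 => _ _ _ H _; apply: H. Qed.
Lemma row2_size q : q < size Q2 -> size (nth [::] R2 q) = k.
Proof. by case: W2 => _ _ _ H _ Hq; rewrite H // ES. Qed.

Lemma st_M0 : nth 0 (st_ranks M) 0 = 0. Proof. by []. Qed.
Lemma st_M1 q : q < n1 -> q + 2 < size (st_ranks M) /\ nth 0 (st_ranks M) (q + 2) = nth 0 Q1 q.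
Proof. move=> Hq; rewrite /= size_cat addn2 /= nth_cat Hq; split=> //; lia. Qed.
Lemma st_M2 q : q < size Q2 -> q + K2 < size (st_ranks M) /\ nth 0 (st_ranks M) (q + K2) = nth 0 Q2 q.
Proof.
move=> Hq; rewrite /= size_cat (_ : q + K2 = (q + n1).+2); last lia.
rewrite /= nth_cat (_ : q + n1 < n1 = false); last lia.
split; [lia | congr nth; lia].
Qed.
Lemma out_M d : d < dl -> d < size (out_ranks M) /\ nth 0 (out_ranks M) d = nth 0 D d.
Proof. move=> Hd; rewrite /= size_cat nth_cat Hd; split=> //; lia. Qed.

Lemma rules_M0 : nth [::] (rules M) 0 = row0 k dl K2 c. Proof. by []. Qed.
Lemma rules_M1 : nth [::] (rules M) 1 = row1 k dl. Proof. by []. Qed.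
Lemma rules_Mq1 q : q < n1 -> nth [::] (rules M) (q + 2) = rowtr dl c 2 (nth [::] R1 q).
Proof.
move=> Hq; rewrite addn2 /= nth_cat size_map sizeR1 Hq.
by rewrite (nth_map [::] [::]) // sizeR1.
Qed.
Lemma rules_Mq2 q : q < size Q2 -> nth [::] (rules M) (q + K2) = rowtr dl c K2 (nth [::] R2 q).
Proof.
move=> Hq; rewrite (_ : q + K2 = (q + n1).+2); last lia.
rewrite /= nth_cat size_map sizeR1 (_ : q + n1 < n1 = false); last lia.
by rewrite (_ : q + n1 - n1 = q); [rewrite (nth_map [::] [::]) // sizeR2 | lia].
Qed.

Lemma states_M q : q < size (st_ranks M) ->
  [\/ q = 0, q = 1, exists2 q', q' < n1 & q = q' + 2 | exists2 q', q' < size Q2 & q = q' + K2].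
Proof.
rewrite /= size_cat => Hq.
case: q Hq => [|[|q]] Hq; [by constructor 1 | by constructor 2 |].
case: (ltnP q n1) => H; first by constructor 3; exists q => //; lia.
constructor 4; exists (q - n1); lia.
Qed.

Lemma in_M_lt a : a < k -> nth 0 (in_ranks M) a = nth 0 S a.
Proof. by move=> Ha; rewrite /= nth_cat Ha. Qed.
Lemma in_M_ge a : k <= a -> nth 0 (in_ranks M) a = nth 0 [:: 2; 1; 0] (a - k).
Proof. by move=> Ha; rewrite /= nth_cat ltnNge Ha. Qed.
Lemma out_M_new j : nth 0 (out_ranks M) (dl + j) = nth 0 [:: 0; 2; 2] j.
Proof. by rewrite /= nth_cat (_ : dl + j < dl = false) ?addKn //; lia. Qed.
Lemma size_out_M : size (out_ranks M) = dl + 3. Proof. by rewrite /= size_cat. Qed.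
Lemma size_st_M : size (st_ranks M) = (n1 + size Q2).+2. Proof. by rewrite /= size_cat. Qed.

Lemma wf_Erhs m kk : wf_rhs M m kk (Erhs dl).
Proof.
rewrite /Erhs wf_rhs_sym size_out_M -[dl]addn0 out_M_new /=; apply/andP; split=> //; lia.
Qed.

Lemma n1_pos : 0 < n1. Proof. by case: W1. Qed.
Lemma n2_pos : 0 < size Q2. Proof. by case: W2. Qed.

Lemma wf_rowtr (Mi : mtt) K q' a :
  wf_mtt Mi -> in_ranks Mi = S -> out_ranks Mi = D ->
  (forall q, q < size (st_ranks Mi) -> q + K < size (st_ranks M) /\ nth 0 (st_ranks M) (q + K) = nth 0 (st_ranks Mi) q) ->
  q' < size (st_ranks Mi) -> a < k + 3 ->
  wf_rhs M (nth 0 (st_ranks Mi) q') (nth 0 (in_ranks M) a) (nth (RPar 0) (rowtr dl c K (nth [::] (rules Mi) q')) a).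
Proof.
move=> Wi Hin Hout HQ Hq Ha.
case: Wi => _ _ _ Hrow Hwf.
have Hs : size (nth [::] (rules Mi) q') = k by rewrite Hrow // Hin.
have HD : forall d, d < size (out_ranks Mi) -> d < size (out_ranks M) /\ nth 0 (out_ranks M) d = nth 0 (out_ranks Mi) d.
  by move=> d; rewrite Hout; exact: out_M.
rewrite rowtr_nth Hs //; case: ltnP => H1.
- apply: (wf_shift HD HQ) (Hwf _ _ Hq _); first by rewrite in_M_lt // Hin.
  by rewrite Hin.
- case: (ltnP c k) => Hc.
  + rewrite (set_nth_default (RPar 0)) ?Hs //.
    apply: (wf_shift (kk := 0) HD HQ) => //; have := Hwf q' c Hq; rewrite Hin => /(_ Hc).
    suff -> : nth 0 S c = 0 by [].
    have : has (pred1 0) S by rewrite has_find.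
    by move/(nth_find 0) => /eqP.
  + have -> : nth (Erhs dl) (nth [::] (rules Mi) q') c = Erhs dl by rewrite nth_default ?Hs.
    exact: wf_Erhs.
Qed.

Lemma wf_build : wf_mtt M.
Proof.
have Hin : size (in_ranks M) = k + 3 by rewrite /= size_cat.
split=> //.
- rewrite /= size_cat !size_map sizeR1 sizeR2 size_cat; lia.
- move=> q /states_M [->|->|[q' Hq ->]|[q' Hq ->]]; rewrite Hin.
  + by rewrite rules_M0 /row0 size_cat size_nseq.
  + by rewrite rules_M1 /row1 size_cat size_nseq.
  + by rewrite rules_Mq1 // size_rowtr row1_size.
  + by rewrite rules_Mq2 // size_rowtr row2_size.
- move=> q a /states_M Hq; rewrite Hin => Ha; rewrite /rule.
  case: Hq => [->|->|[q' Hq ->]|[q' Hq ->]].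
  + rewrite rules_M0 row0_nth // st_M0.
    case: eqP => [->|_]; last exact: wf_Erhs.
    case: ltnP => _; last exact: wf_Erhs.
    rewrite in_M_ge // subnn /gadget wf_rhs_call size_st_M /=.
    have h1 : nth 0 (Q1 ++ Q2) 0 = 0 by rewrite nth_cat n1_pos; case: W1.
    have h2 : nth 0 (Q1 ++ Q2) (0 + n1) = 0 by rewrite nth_cat ltnNge add0n leqnn subnn /=; case: W2.
    have h3 : nth 0 (D ++ [:: 0; 2; 2]) dl = 0 by rewrite nth_cat ltnn subnn.
    rewrite !size_cat h1 h2 h3 /=.
    have := n1_pos; have := n2_pos; lia.
  + rewrite rules_M1 row1_nth //.
    case: eqP => [->|_]; last by [].
    rewrite in_M_ge; last lia.
    rewrite (_ : k.+1 - k = 1); last lia.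
    rewrite /grule wf_rhs_sym size_out_M.
    have E2 : nth 0 (out_ranks M) dl.+2 = 2 by rewrite -addn2 out_M_new.
    have E1 : nth 0 (out_ranks M) dl.+1 = 2 by rewrite -addn1 out_M_new.
    rewrite E2 /=.
    move: E1; rewrite /= => E1.
    rewrite !size_cat E1 /=; lia.
  + have [_ ->] := st_M1 Hq; rewrite rules_Mq1 //.
    exact: wf_rowtr W1 erefl erefl st_M1 Hq Ha.
  + have [_ ->] := st_M2 Hq; rewrite rules_Mq2 //.
    exact: wf_rowtr W2 ES ED st_M2 Hq Ha.
Qed.
End Build.

Fixpoint clean (k c : nat) (t : tree) : tree :=
  match t with
  | GenTree.Node a ts => if a < k then GenTree.Node a (map (clean k c) ts) else GenTree.Node c [::]
  | GenTree.Leaf _ => t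
  end.

Lemma nth_In' (T : Type) (x0 : T) l i : i < size l -> List.In (nth x0 l i) l.
Proof. elim: l i => [|x l IH] [|i] //= H; [by left | right; exact: IH]. Qed.

Lemma eq_map_In (T U : Type) (f g : T -> U) l : (forall x, List.In x l -> f x = g x) -> map f l = map g l.
Proof. elim: l => //= x l IH H; rewrite H ?IH //; [move=> y Hy; apply: H; right | left] => //. Qed.

Lemma inst_shift (Mi : mtt) K m kk r ys fs fs' :
  wf_rhs Mi m kk r ->
  (forall q i ys', q < size (st_ranks Mi) -> i < kk ->
     nth (fun _ _ => dtree) fs i (q + K) ys' = nth (fun _ _ => dtree) fs' i q ys') ->
  inst (shiftr K r) ys fs = inst r ys fs'.
Proof.
move=> + Hf; elim/rhs_ind2: r => [d a IH|j|q i a IH].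
- rewrite shiftr_sym wf_rhs_sym !inst_sym => /and3P [_ _ /allIn H].
  congr (Node d _); rewrite -map_comp; apply: eq_map_In => x Hx /=; apply: IH => //; exact: H.
- by [].
- rewrite shiftr_call wf_rhs_call !inst_call => /and4P [Hq Hi _ /allIn H].
  rewrite Hf //; congr (nth _ fs' i q _).
  rewrite -map_comp; apply: eq_map_In => x Hx /=; apply: IH => //; exact: H.
Qed.

Fixpoint Gf (A dl : nat) (u : tree) (y1 y2 z : tree) : tree :=
  match u with
  | GenTree.Node a [:: u'] =>
      if a == A then GenTree.Node dl.+2 [:: Gf A dl u' y1 y2 (GenTree.Node dl.+1 [:: z; y1]);
                                            Gf A dl u' y1 y2 (GenTree.Node dl.+1 [:: z; y2])]
      else z
  | _ => z
  end.

Lemma sumn_map_le (T : Type) (f g : T -> nat) l :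
  (forall x, List.In x l -> f x <= g x) -> sumn (map f l) <= sumn (map g l).
Proof.
elim: l => //= x l IH H; apply: leq_add; first by apply: H; left.
by apply: IH => y Hy; apply: H; right.
Qed.

Lemma Gf_node A dl u' y1 y2 z : Gf A dl (Node A [:: u']) y1 y2 z =
  Node dl.+2 [:: Gf A dl u' y1 y2 (Node dl.+1 [:: z; y1]); Gf A dl u' y1 y2 (Node dl.+1 [:: z; y2])].
Proof. by rewrite /= eqxx. Qed.

Lemma inst_grule dl y1 y2 z (f : nat -> seq tree -> tree) :
  inst (grule dl) [:: y1; y2; z] [:: f] =
  Node dl.+2 [:: f 1 [:: y1; y2; Node dl.+1 [:: z; y1]]; f 1 [:: y1; y2; Node dl.+1 [:: z; y2]]].
Proof. by []. Qed.

Lemma inst_gadget dl K2 (f g : nat -> seq tree -> tree) :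
  inst (gadget dl K2) [::] [:: f; g] = g 1 [:: f 2 [::]; f K2 [::]; Node dl [::]].
Proof. by []. Qed.

Section Sem.
Variables M1 M2 : mtt.
Hypothesis W1 : wf_mtt M1.
Hypothesis W2 : wf_mtt M2.
Hypothesis ES : in_ranks M2 = in_ranks M1.
Hypothesis ED : out_ranks M2 = out_ranks M1.

Local Notation S := (in_ranks M1).
Local Notation D := (out_ranks M1).
Local Notation Q1 := (st_ranks M1).
Local Notation Q2 := (st_ranks M2).
Local Notation k := (size S).
Local Notation dl := (size D).
Local Notation n1 := (size Q1).
Local Notation K2 := (2 + size Q1).
Local Notation c := (cz S).
Local Notation M := (build M1 M2).

Lemma wf_node_inv a ts : wf_tree (in_ranks M) (Node a ts) ->
  [/\ a < k + 3, size ts = nth 0 (in_ranks M) a & forall t, List.In t ts -> wf_tree (in_ranks M) t].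
Proof.
rewrite wf_tree_node => /and3P [Ha /eqP Hs /allIn Hall]; split=> //.
by move: Ha; rewrite /= size_cat.
Qed.

Lemma nth_c0 : c < k -> nth 0 S c = 0.
Proof.
move=> Hc; have : has (pred1 0) S by rewrite has_find.
by move/(nth_find 0) => /eqP.
Qed.

Lemma sim (Mi : mtt) K : wf_mtt Mi -> in_ranks Mi = S ->
  (forall q, q < size (st_ranks Mi) -> nth [::] (rules M) (q + K) = rowtr dl c K (nth [::] (rules Mi) q)) ->
  c < k ->
  forall s, wf_tree (in_ranks M) s -> forall q ys, q < size (st_ranks Mi) ->
  msem M s (q + K) ys = msem Mi (clean k c s) q ys.
Proof.
move=> Wi Hin Hrules Hc; case: (Wi) => _ _ _ Hrow Hwf.
elim/tree_ind2 => [[]|a ts IH] /wf_node_inv [Ha Hs Hch] q ys Hq.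
have Hsz : size (nth [::] (rules Mi) q) = k by rewrite Hrow // Hin.
rewrite msem_node /rule Hrules // rowtr_nth Hsz //= .
case: ltnP => Hak.
- rewrite msem_node.
  have Ha' : a < size (in_ranks Mi) by rewrite Hin.
  apply: (inst_shift ys (Hwf q a Hq Ha')).
  move=> q' i ys' Hq' Hi.
  have Hi' : i < size ts by rewrite Hs in_M_lt // -Hin.
  rewrite -map_comp !(nth_map dtree) //= IH //; [exact: nth_In' | apply: Hch; exact: nth_In'].
- rewrite msem_node /= (set_nth_default (RPar 0)) ?Hsz //.
  have Hc' : c < size (in_ranks Mi) by rewrite Hin.
  apply: (inst_shift ys (Hwf q c Hq Hc')) => q' i ys' _.
  by rewrite Hin nth_c0.
Qed.

Lemma msem_g u : wf_tree (in_ranks M) u ->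
  forall y1 y2 z, msem M u 1 [:: y1; y2; z] = Gf k.+1 dl u y1 y2 z.
Proof.
elim/tree_ind2: u => [[]|a ts IH] /wf_node_inv [Ha Hs Hch] y1 y2 z.
rewrite msem_node /rule rules_M1 row1_nth //.
case: eqP => [Ea|Na].
- subst a; move: Hs; rewrite in_M_ge; last lia.
  rewrite (_ : k.+1 - k = 1); last lia.
  case: ts IH Hch => [|u' [|]] // IH Hch _.
  rewrite map_cons inst_grule Gf_node !IH //; by [left | apply: Hch; left].
- by case: ts IH Hch Hs => [|u' [|]] //= _ _ _; case: eqP.
Qed.

Lemma root_R t u : c < k -> wf_tree (in_ranks M) (Node k [:: t; u]) ->
  msem M (Node k [:: t; u]) 0 [::] =
  Gf k.+1 dl u (mrun M1 (clean k c t)) (mrun M2 (clean k c t)) (Node dl [::]).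
Proof.
move=> Hc /wf_node_inv [_ _ Hch].
have Ht : wf_tree (in_ranks M) t by apply: Hch; left.
have Hu : wf_tree (in_ranks M) u by apply: Hch; right; left.
rewrite msem_node /rule rules_M0 row0_nth ?eqxx ?Hc; last lia.
rewrite map_cons map_cons inst_gadget msem_g //.
have E1 := @sim M1 2 W1 erefl (fun q Hq => rules_Mq1 M2 W1 Hq) Hc t Ht 0 [::] (n1_pos W1).
have E2 := @sim M2 K2 W2 ES (fun q Hq => rules_Mq2 W1 W2 Hq) Hc t Ht 0 [::] (n2_pos W2).
rewrite add0n in E1 E2.
by rewrite E1 E2.
Qed.

Lemma root_other a ts : wf_tree (in_ranks M) (Node a ts) -> ~~ ((a == k) && (c < k)) ->
  msem M (Node a ts) 0 [::] = Node dl [::].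
Proof.
move=> /wf_node_inv [Ha _ _] H.
rewrite msem_node /rule rules_M0 row0_nth //.
by case: eqP H => //= _; case: ltnP.
Qed.

Lemma clean_node a ts : clean k c (Node a ts) = if a < k then Node a (map (clean k c) ts) else Node c [::].
Proof. by []. Qed.

Lemma clean_wf t : c < k -> wf_tree (in_ranks M) t -> wf_tree S (clean k c t).
Proof.
move=> Hc; elim/tree_ind2: t => [[]|a ts IH] /wf_node_inv [Ha Hs Hch] /=.
case: ltnP => Hak.
- rewrite wf_tree_node Hak size_map Hs in_M_lt // eqxx /=.
  apply: all_map_In => x Hx; apply: IH => //; exact: Hch.
- by rewrite wf_tree_node Hc nth_c0.
Qed.

Lemma tsize_clean t : tsize (clean k c t) <= tsize t.
Proof.
elim/tree_ind2: t => [v|a ts IH] //.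
rewrite clean_node; case: ltnP => _; rewrite !tsize_node; last by rewrite /=; lia.
rewrite -map_comp leq_add2r; apply: sumn_map_le => x Hx; exact: IH.
Qed.

Lemma clean_id t : wf_tree S t -> clean k c t = t.
Proof.
elim/tree_ind2: t => [[]|a ts IH]; rewrite wf_tree_node => /and3P [Ha _ /allIn Hall] /=.
rewrite Ha; congr (Node a _); elim: ts IH Hall => //= x ts IHts IH Hall.
rewrite IH; [|by left|by apply: Hall; left]; congr cons.
by apply: IHts => y Hy; [apply: IH; right | apply: Hall; right].
Qed.
End Sem.

Lemma self_sub (x : tree) : x \in subtrees x.
Proof. case: x => [v|a ts]; [by rewrite /= inE | by rewrite subtrees_node inE eqxx]. Qed.

Lemma undup_size_cat (T : eqType) (l1 l2 : seq T) : size (undup (l1 ++ l2)) <= size l1 + size (undup l2).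
Proof. elim: l1 => //= x l1 IH; case: ifP => _ /=; lia. Qed.

Lemma nsub_sub x L : {subset subtrees x <= L} -> nsub x <= size (undup L).
Proof.
move=> H; rewrite /nsub; apply: uniq_leq_size; first exact: undup_uniq.
by move=> y; rewrite !mem_undup; exact: H.
Qed.

Lemma nsub_ge x L : uniq L -> {subset L <= subtrees x} -> size L <= nsub x.
Proof. move=> U H; apply: uniq_leq_size => // y Hy; rewrite mem_undup; exact: H. Qed.

Fixpoint gl A dl (u w z : tree) : seq tree :=
  match u with
  | GenTree.Node a [:: u'] =>
      if a == A then Gf A dl u w w z :: Node dl.+1 [:: z; w] :: gl A dl u' w (Node dl.+1 [:: z; w])
      else [::]
  | _ => [::]
  end.

Lemma Gf_other A dl a ts y1 y2 z : ~~ ((a == A) && (size ts == 1)) -> Gf A dl (Node a ts) y1 y2 z = z.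
Proof. by case: ts => [|u' [|]] //=; case: eqP. Qed.
Lemma gl_other A dl a ts w z : ~~ ((a == A) && (size ts == 1)) -> gl A dl (Node a ts) w z = [::].
Proof. by case: ts => [|u' [|]] //=; case: eqP. Qed.
Lemma gl_node A dl u' w z : gl A dl (Node A [:: u']) w z =
  Gf A dl (Node A [:: u']) w w z :: Node dl.+1 [:: z; w] :: gl A dl u' w (Node dl.+1 [:: z; w]).
Proof. by rewrite /= eqxx. Qed.

Lemma sub_G A dl u : forall w z,
  {subset subtrees (Gf A dl u w w z) <= gl A dl u w z ++ subtrees z ++ subtrees w}.
Proof.
elim/tree_ind2: u => [v|a ts IH] w z x.
  by rewrite /= => H; rewrite !mem_cat H ?orbT.
case E: ((a == A) && (size ts == 1)); last first.
  by rewrite Gf_other ?E // gl_other ?E // => H; rewrite !mem_cat H ?orbT.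
case/andP: E => /eqP -> ; case: ts IH => [|u' [|]] // IH _.
rewrite Gf_node gl_node subtrees_node /= cats0 => H.
have IH' := IH u' (or_introl erefl) w (Node dl.+1 [:: z; w]) x.
move: H IH'; rewrite subtrees_node /= cats0 eqxx; do 3! rewrite ?mem_cat ?inE.
set G := Node _ _.
case: (x == G); case: (x \in subtrees _); case: (x \in gl _ _ _ _ _);
  case: (x == _); case: (x \in subtrees z); case: (x \in subtrees w) => //=;
  by move=> _ /(_ isT).
Qed.

Lemma size_gl A dl u : forall w z, size (gl A dl u w z) <= 2 * tsize u.
Proof.
elim/tree_ind2: u => [v|a ts IH] w z //.
case E: ((a == A) && (size ts == 1)); last by rewrite gl_other ?E.
case/andP: E => /eqP -> ; case: ts IH => [|u' [|]] // IH _.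
rewrite gl_node tsize_node /=.
have := IH u' (or_introl erefl) w (Node dl.+1 [:: z; w]); lia.
Qed.

Lemma nsub_G A dl u w : nsub (Gf A dl u w w (Node dl [::])) <= 2 * tsize u + 1 + nsub w.
Proof.
have H1 := nsub_sub (@sub_G A dl u w (Node dl [::])).
apply: (leq_trans H1); apply: (leq_trans (undup_size_cat _ _)).
have := size_gl A dl u w (Node dl [::]).
have -> : subtrees (Node dl [::]) ++ subtrees w = [:: Node dl [::]] ++ subtrees w by rewrite subtrees_node.
have := undup_size_cat [:: Node dl [::]] (subtrees w); rewrite /nsub => h1 h2.
apply: (leq_trans (leq_add h2 h1)); by rewrite addnA.
Qed.

Fixpoint leaf dl (w1 w2 : tree) (bs : seq bool) (z : tree) :=
  if bs is b :: bs' then leaf dl w1 w2 bs' (Node dl.+1 [:: z; if b then w1 else w2]) else z.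
Definition An A B n := iter n (fun x => Node A [:: x]) (Node B [::]).

Lemma leaf_mem A B dl w1 w2 n : B != A -> forall bs z, size bs = n ->
  leaf dl w1 w2 bs z \in subtrees (Gf A dl (An A B n) w1 w2 z).
Proof.
move=> HBA; elim: n => [|n IH] [|b bs] z //= Hs.
- exact: self_sub.
- rewrite eqxx subtrees_node inE; apply/orP; right.
  have Hs' : size bs = n by case: Hs.
  by case: b; rewrite /= ?mem_cat IH ?orbT.
Qed.

Lemma leaf_inj dl w1 w2 : w1 != w2 -> forall bs bs' z z', size bs = size bs' ->
  leaf dl w1 w2 bs z = leaf dl w1 w2 bs' z' -> bs = bs' /\ z = z'.
Proof.
move=> Hw; elim=> [|b bs IH] [|b' bs'] z z' //= Hs H.
have [-> E] := IH bs' _ _ (congr1 predn Hs) H.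
case: E => -> Eb; split=> //; congr cons; clear H IH.
by case: b b' Eb => [] [] // E; move: Hw; rewrite E eqxx.
Qed.

Fixpoint bseqs n : seq (seq bool) :=
  if n is n'.+1 then map (cons true) (bseqs n') ++ map (cons false) (bseqs n') else [:: [::]].

Lemma bseqs_size n : size (bseqs n) = 2 ^ n.
Proof. elim: n => //= n IH; rewrite size_cat !size_map IH expnS; lia. Qed.

Lemma bseqs_len n bs : bs \in bseqs n -> size bs = n.
Proof.
elim: n bs => [|n IH] bs /=; first by rewrite inE => /eqP ->.
by rewrite mem_cat => /orP [] /mapP [bs' H ->] /=; rewrite IH.
Qed.

Lemma bseqs_uniq n : uniq (bseqs n).
Proof.
elim: n => //= n IH; rewrite cat_uniq !map_inj_uniq ?IH //; try by move=> ? ? [].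
rewrite /= andbT; apply/hasPn => x /mapP [bs _ ->]; apply/mapP => [[bs' _]] //.
Qed.

Lemma tsize_An A B n : tsize (An A B n) = n.+1.
Proof. elim: n => // n IH; rewrite /An iterS -/(An A B n) tsize_node /= IH; lia. Qed.

Lemma nsub_lower A B dl w1 w2 n z : B != A -> w1 != w2 ->
  2 ^ n <= nsub (Gf A dl (An A B n) w1 w2 z).
Proof.
move=> HBA Hw; rewrite -bseqs_size -(size_map (fun bs => leaf dl w1 w2 bs z)).
apply: nsub_ge.
- rewrite map_inj_in_uniq ?bseqs_uniq // => bs bs' H1 H2 E.
  have := leaf_inj Hw _ E; rewrite (bseqs_len H1) (bseqs_len H2) => /(_ erefl) [] //.
- move=> x /mapP [bs Hbs ->]; apply: leaf_mem => //; exact: bseqs_len.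
Qed.

Section Final.
Variables M1 M2 : mtt.
Hypothesis W1 : wf_mtt M1.
Hypothesis W2 : wf_mtt M2.
Hypothesis ES : in_ranks M2 = in_ranks M1.
Hypothesis ED : out_ranks M2 = out_ranks M1.

Local Notation S := (in_ranks M1).
Local Notation D := (out_ranks M1).
Local Notation k := (size S).
Local Notation dl := (size D).
Local Notation c := (cz S).
Local Notation M := (build M1 M2).

Lemma An_wf n : wf_tree (in_ranks M) (An k.+1 k.+2 n).
Proof.
elim: n => [|n IH].
- rewrite (_ : An k.+1 k.+2 0 = Node k.+2 [::]) // wf_tree_node in_M_ge; last lia.
  rewrite (_ : k.+2 - k = 2); last lia.
  rewrite size_cat /= andbT; lia.
- rewrite (_ : An k.+1 k.+2 n.+1 = Node k.+1 [:: An k.+1 k.+2 n]) // wf_tree_node in_M_ge; last lia.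
  rewrite (_ : k.+1 - k = 1); last lia.
  rewrite size_cat /= IH !andbT; lia.
Qed.

Lemma wf_ext t : wf_tree S t -> wf_tree (in_ranks M) t.
Proof.
elim/tree_ind2: t => [[]|a ts IH]; rewrite !wf_tree_node => /and3P [Ha Hs /allIn Hall].
rewrite in_M_lt // Hs /= size_cat (leq_trans Ha) ?leq_addr //=.
apply/allIn => x Hx; apply: IH => //; exact: Hall.
Qed.

Lemma has_c t : wf_tree S t -> c < k.
Proof.
elim/tree_ind2: t => [[]|a ts IH]; rewrite wf_tree_node => /and3P [Ha /eqP Hs /allIn Hall].
case: ts IH Hs Hall => [|t' ts'] IH Hs Hall.
- rewrite /cz -has_find; apply/hasP; exists (nth 0 S a); first exact: mem_nth.
  by rewrite /= -Hs.
- by apply: (IH t'); [left | apply: Hall; left].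
Qed.

Lemma lsoi_equiv : LSOI M1 -> mtt_equiv M1 M2 -> LSOI M.
Proof.
move=> [C1 HC1] Heq; exists (C1 + 3) => s Hs.
case: s Hs => [[]|a ts] Hs.
case E: ((a == k) && (c < k)); last first.
  rewrite /mrun root_other ?E // tsize_node /nsub subtrees_node /=; lia.
case/andP: E => /eqP Ea Hc; subst a.
have [_ Hsz Hch] := wf_node_inv Hs.
move: Hsz; rewrite in_M_ge // subnn /=.
case: ts Hs Hch => [|t [|u []]] // Hs Hch _.
have Ht : wf_tree (in_ranks M) t by apply: Hch; left.
rewrite /mrun root_R // -(Heq _ (clean_wf Hc Ht)).
apply: leq_trans (nsub_G _ _ _ _) _.
have := HC1 _ (clean_wf Hc Ht).
have := tsize_clean M1 t.
set T := tsize t; set U := tsize u; set N := nsub _; set T' := tsize _.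
move=> h1 h2.
have h3 : C1 * T' <= C1 * T by apply: leq_mul.
have h4 : C1 * T <= C1 * (T + (U + 0) + 1) by apply: leq_mul; lia.
rewrite mulnDl; lia.
Qed.

Lemma equiv_lsoi : LSOI M -> mtt_equiv M1 M2.
Proof.
move=> [C HC] t Ht.
case: (eqVneq (mrun M1 t) (mrun M2 t)) => // Hne; exfalso.
have Hc := has_c Ht.
set T := tsize t.
set m := C * (T + 4) + 1.
set n := m + m.
have Hw : wf_tree (in_ranks M) (Node k [:: t; An k.+1 k.+2 n]).
  rewrite wf_tree_node size_cat in_M_ge // subnn /= wf_ext // An_wf /= andbT.
  lia.
have := HC _ Hw.
rewrite /mrun root_R // clean_id //.
have hBA : k.+2 != k.+1 by rewrite eqSS; apply/eqP; lia.
have h1 := nsub_lower (A := k.+1) (B := k.+2) (w1 := mrun M1 t) (w2 := mrun M2 t) dl n (Node dl [::]) hBA Hne.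
move=> h2.
have := leq_trans h1 h2.
have En : n = m + m by [].
have Em : m = C * (T + 4) + 1 by [].
clearbody n m.
rewrite tsize_node [sumn _]/= tsize_An -/T => H.
have hm : m < 2 ^ m by apply: ltn_expl.
move: H; rewrite En expnD; set X := 2 ^ m => H.
have h3 : m * m < X * X by apply: ltn_mul.
have h4 : C * (T + ((m + m).+1 + 0) + 1) <= m * m.
  rewrite {2}Em mulnDr muln1.
  have h5 : C * (T + ((m + m).+1 + 0) + 1) <= m * (C * (T + 4)).
    rewrite mulnCA; apply: leq_mul => //.
    have : 1 <= m by rewrite Em; lia.
    nia.
  lia.
lia.
Qed.
End Final.


Theorem mainTheorem12 :
  exists p : murec,
    forall M1 M2 : mtt,
      wf_mtt M1 -> wf_mtt M2 ->
      in_ranks M1 = in_ranks M2 -> out_ranks M1 = out_ranks M2 ->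
      LSOI M1 -> LSOI M2 ->
      exists M : mtt,
        [/\ mueval p [:: enc_mtt M1; enc_mtt M2] (enc_mtt M), wf_mtt M &
            (LSOI M <-> mtt_equiv M1 M2)].
Proof.
have [P HP] := comp_Cn.
exists P => M1 M2 W1 W2 ES ED L1 L2.
exists (build M1 M2); split.
- have := HP [:: enc_mtt M1; enc_mtt M2] erefl; by rewrite /= Cn_ok.
- exact: wf_build W1 W2 (esym ES) (esym ED).
- split.
  + exact: equiv_lsoi W1 W2 (esym ES).
  + exact: lsoi_equiv W1 W2 (esym ES) L1.
Qed.
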